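(* Let $\mathcal{C}$ be a Frobenius category and $f:M\to N$ a morphism in $\mathcal{C}$. Then: (1) $f$ is a $0$-Ext-phantom morphism if and only if $f$ factors through a projective object of $\mathcal{C}$; (2) $f$ is a $0$-Ext-invertible morphism if and only if there exist projective objects $P,Q$ of $\mathcal{C}$ and morphisms $g_1:Q\to N$, $l:M\to P$, $g_2:Q\to P$ such that the morphism $M\oplus Q\to N\oplus P$ given by the matrix $\begin{pmatrix} f & g_1\\ l & g_2\end{pmatrix}$ is an isomorphism in $\mathcal{C}$.
   Context: Let $\mathcal{A}$ be an abelian category and $\mathcal{C}$ an extension-closed full additive subcategory of $\mathcal{A}$, viewed as an exact category whose conflations are the short exact sequences of $\mathcal{A}$ with all terms in $\mathcal{C}$; $\operatorname{Ext}^i_{\mathcal{C}}$ is Yoneda Ext in $\mathcal{C}$. $\mathcal{C}$ is a Frobenius category if it has enough projectives and enough injectives and the projective objects coincide with the injective objects. A morphism $f:M\to N$ is $0$-Ext-phantom if the natural transformation $\operatorname{Ext}^1_{\mathcal{C}}(-,f):\operatorname{Ext}^1_{\mathcal{C}}(-,M)\to\operatorname{Ext}^1_{\mathcal{C}}(-,N)$ is zero, and $0$-Ext-invertible if it is a natural isomorphism. *)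

(* Defs.v *)
(* an abelian category is set up from scratch as a
   preadditive category (hom-sets are mathcomp zmodTypes) with the
   abelian axioms; Yoneda Ext^1 in an extension-closed subcategory is
   encoded via extensions, the Yoneda equivalence and pushout maps. *)
From HB Require Import structures.
From mathcomp Require Import all_boot all_algebra.
Set Implicit Arguments. Unset Strict Implicit. Unset Printing Implicit Defensive.
Import GRing.Theory.
Local Open Scope ring_scope.

Record PreAdd := {
  Ob : Type;
  Mor : Ob -> Ob -> zmodType;
  idm : forall X, Mor X X;
  comp : forall X Y Z, Mor Y Z -> Mor X Y -> Mor X Z;
  compA : forall W X Y Z (h : Mor Y Z) (g : Mor X Y) (f : Mor W X),
      comp h (comp g f) = comp (comp h g) f;
  comp1m : forall X Y (f : Mor X Y), comp (idm Y) f = f;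
  compm1 : forall X Y (f : Mor X Y), comp f (idm X) = f;
  compDl : forall X Y Z (g g' : Mor Y Z) (f : Mor X Y),
      comp (g + g') f = comp g f + comp g' f;
  compDr : forall X Y Z (g : Mor Y Z) (f f' : Mor X Y),
      comp g (f + f') = comp g f + comp g f' }.

Arguments Mor {p} _ _.
Arguments idm {p} X.
Arguments comp {p X Y Z} _ _.

Section Defs.
Variable A : PreAdd.
Local Notation Ob := (Ob A).
Local Notation Hom := (@Mor A).

Definition mono X Y (f : Hom X Y) :=
  forall W (g : Hom W X), comp f g = 0 -> g = 0.
Definition epi X Y (f : Hom X Y) :=
  forall W (g : Hom Y W), comp g f = 0 -> g = 0.

Definition is_kernel K X Y (k : Hom K X) (f : Hom X Y) :=
  comp f k = 0 /\
  forall W (g : Hom W X), comp f g = 0 ->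
    exists h : Hom W K, comp k h = g /\ forall h', comp k h' = g -> h' = h.
Definition is_cokernel X Y Q (c : Hom Y Q) (f : Hom X Y) :=
  comp c f = 0 /\
  forall W (g : Hom Y W), comp g f = 0 ->
    exists h : Hom Q W, comp h c = g /\ forall h', comp h' c = g -> h' = h.

Definition is_zero_object (Z : Ob) :=
  forall X, (forall h : Hom X Z, h = 0) /\ (forall h : Hom Z X, h = 0).

Definition is_biproduct X1 X2 B (i1 : Hom X1 B) (i2 : Hom X2 B)
    (p1 : Hom B X1) (p2 : Hom B X2) :=
  [/\ comp p1 i1 = idm X1, comp p2 i2 = idm X2, comp p2 i1 = 0,
      comp p1 i2 = 0 & comp i1 p1 + comp i2 p2 = idm B].

Definition abelian :=
  (exists Z, is_zero_object Z)
  /\ (forall X1 X2, exists B (i1 : Hom X1 B) (i2 : Hom X2 B) p1 p2,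
         is_biproduct i1 i2 p1 p2)
  /\ (forall X Y (f : Hom X Y), exists K (k : Hom K X), is_kernel k f)
  /\ (forall X Y (f : Hom X Y), exists Q (c : Hom Y Q), is_cokernel c f)
  /\ (forall X Y (f : Hom X Y), mono f -> exists Z (g : Hom Y Z), is_kernel f g)
  /\ (forall X Y (f : Hom X Y), epi f -> exists Z (g : Hom Z X), is_cokernel f g).

Definition is_iso X Y (f : Hom X Y) :=
  exists g : Hom Y X, comp g f = idm X /\ comp f g = idm Y.

Definition short_exact X E Y (i : Hom X E) (p : Hom E Y) :=
  is_kernel i p /\ is_cokernel p i.

Variable C : Ob -> Prop.

Definition ext_closed_additive :=
  [/\ exists Z, is_zero_object Z /\ C Z,
      forall X1 X2 B (i1 : Hom X1 B) (i2 : Hom X2 B) p1 p2,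
        is_biproduct i1 i2 p1 p2 -> C X1 -> C X2 -> C B
    & forall X E Y (i : Hom X E) (p : Hom E Y),
        short_exact i p -> C X -> C Y -> C E].

Definition conflation X E Y (i : Hom X E) (p : Hom E Y) :=
  [/\ short_exact i p, C X, C E & C Y].

Definition projective (P : Ob) :=
  C P /\ forall X E Y (i : Hom X E) (p : Hom E Y), conflation i p ->
    forall g : Hom P Y, exists h : Hom P E, comp p h = g.
Definition injective (I : Ob) :=
  C I /\ forall X E Y (i : Hom X E) (p : Hom E Y), conflation i p ->
    forall g : Hom X I, exists h : Hom E I, comp h i = g.

Definition frobenius :=
  [/\ forall X, C X -> exists K P (i : Hom K P) (p : Hom P X),
         conflation i p /\ projective P,
      forall X, C X -> exists I Y (i : Hom X I) (p : Hom I Y),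
         conflation i p /\ injective I
    & forall P, C P -> (projective P <-> injective P)].

(* an element of Ext^1_C(X,M) is represented by a conflation M -> E -> X *)
Record extension (X M : Ob) := Extension {
  ext_mid : Ob;
  ext_in : Hom M ext_mid;
  ext_out : Hom ext_mid X;
  ext_confl : conflation ext_in ext_out }.

Definition ext_equiv X M (xi xi' : extension X M) :=
  exists e : Hom (ext_mid xi) (ext_mid xi'),
    comp e (ext_in xi) = ext_in xi' /\ comp (ext_out xi') e = ext_out xi.

(* xi' represents f_* [xi] = Ext^1_C(X, f) [xi] (pushout along f) *)
Definition pushout_ext X M N (f : Hom M N) (xi : extension X M)
    (xi' : extension X N) :=
  exists e : Hom (ext_mid xi) (ext_mid xi'),
    comp e (ext_in xi) = comp (ext_in xi') f /\
    comp (ext_out xi') e = ext_out xi.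

(* xi represents the zero element of Ext^1_C(X, N):
   the class of the split sequence N -> N (+) X -> X *)
Definition ext_zero X N (xi : extension X N) :=
  exists B (i1 : Hom N B) (i2 : Hom X B) p1 p2,
    is_biproduct i1 i2 p1 p2 /\
    exists e : Hom B (ext_mid xi),
      comp e i1 = ext_in xi /\ comp (ext_out xi) e = p2.

(* Ext^1_C(-, f) is the zero natural transformation *)
Definition ext_phantom0 M N (f : Hom M N) :=
  forall X, C X -> forall (xi : extension X M) (xi' : extension X N),
    pushout_ext f xi xi' -> ext_zero xi'.

(* Ext^1_C(-, f) is a natural isomorphism: each component
   Ext^1_C(X, M) -> Ext^1_C(X, N) is bijective on Yoneda classes *)
Definition ext_invertible0 M N (f : Hom M N) :=
  forall X, C X ->
    (forall (xi1 xi2 : extension X M) (eta1 eta2 : extension X N),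
        pushout_ext f xi1 eta1 -> pushout_ext f xi2 eta2 ->
        ext_equiv eta1 eta2 -> ext_equiv xi1 xi2) /\
    (forall eta : extension X N, exists (xi : extension X M)
        (eta' : extension X N), pushout_ext f xi eta' /\ ext_equiv eta' eta).

Definition factors_through_projective M N (f : Hom M N) :=
  exists P (a : Hom M P) (b : Hom P N), projective P /\ f = comp b a.

(* the matrix [[f, g1], [l, g2]] : M (+) Q -> N (+) P is an isomorphism *)
Definition matrix_iso_condition M N (f : Hom M N) :=
  exists P Q (g1 : Hom Q N) (l : Hom M P) (g2 : Hom Q P),
    projective P /\ projective Q /\
    exists B1 (iM : Hom M B1) (iQ : Hom Q B1) (pM : Hom B1 M) (pQ : Hom B1 Q)
           B2 (jN : Hom N B2) (jP : Hom P B2) (qN : Hom B2 N) (qP : Hom B2 P),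
      is_biproduct iM iQ pM pQ /\ is_biproduct jN jP qN qP /\
      is_iso (comp jN (comp f pM) + comp jN (comp g1 pQ)
              + comp jP (comp l pM) + comp jP (comp g2 pQ)).

End Defs.

(* Main.v *)
From Pilot Require Import Defs.
From HB Require Import structures.
From mathcomp Require Import all_boot all_algebra.
Set Implicit Arguments. Unset Strict Implicit. Unset Printing Implicit Defensive.
Import GRing.Theory.
Local Open Scope ring_scope.
Import Pilot.Defs.
Inductive zex := ZAtom (n : nat) | ZZero | ZAdd (a b : zex) | ZOpp (a : zex).

Fixpoint zeval (V : zmodType) (l : seq V) (e : zex) : V :=
  match e with
  | ZAtom n => nth 0 l n
  | ZZero => 0
  | ZAdd a b => zeval l a + zeval l b
  | ZOpp a => - zeval l a
  end.

Fixpoint zcoef (e : zex) (k : nat) : int :=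
  match e with
  | ZAtom n => ((k == n) : nat)%:Z
  | ZZero => 0
  | ZAdd a b => zcoef a k + zcoef b k
  | ZOpp a => - zcoef a k
  end.

Fixpoint zbound (e : zex) : nat :=
  match e with
  | ZAtom n => n.+1
  | ZZero => 0%N
  | ZAdd a b => maxn (zbound a) (zbound b)
  | ZOpp a => zbound a
  end.

Fixpoint zlc (V : zmodType) (l : seq V) (c : nat -> int) (N : nat) : V :=
  match N with
  | 0%N => 0
  | N'.+1 => zlc l c N' + nth 0 l N' *~ c N'
  end.

Lemma zlc_ext (V : zmodType) (l : seq V) c1 c2 N :
  (forall k, (k < N)%N -> c1 k = c2 k) -> zlc l c1 N = zlc l c2 N.
Proof.
elim: N => //= N IH H; rewrite IH ?H //; move=> k Hk; apply: H; exact: ltnW.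
Qed.

Lemma zlc_add (V : zmodType) (l : seq V) c1 c2 N :
  zlc l (fun k => c1 k + c2 k) N = zlc l c1 N + zlc l c2 N.
Proof.
elim: N => /= [|N ->]; first by rewrite addr0.
by rewrite mulrzDr addrACA.
Qed.

Lemma zlc_opp (V : zmodType) (l : seq V) c N :
  zlc l (fun k => - c k) N = - zlc l c N.
Proof. elim: N => /= [|N ->]; first by rewrite oppr0. by rewrite mulrNz opprD. Qed.

Lemma zlc_zero (V : zmodType) (l : seq V) c N :
  (forall k, (k < N)%N -> c k = 0) -> zlc l c N = 0.
Proof.
elim: N => //= N IH H; rewrite IH ?H // ?mulr0z ?addr0 //; move=> k Hk; apply: H; exact: ltnW.
Qed.

Lemma zlc_atom (V : zmodType) (l : seq V) n N :
  (n < N)%N -> zlc l (fun k => ((k == n) : nat)%:Z) N = nth 0 l n.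
Proof.
elim: N => //= N IH; rewrite ltnS leq_eqVlt => /orP [/eqP ->|Hn].
  rewrite eqxx /= zlc_zero ?add0r //.
  by move=> k Hk; rewrite (ltn_eqF Hk).
by rewrite IH // (gtn_eqF Hn) mulr0z addr0.
Qed.

Lemma zeval_lc (V : zmodType) (l : seq V) e N :
  (zbound e <= N)%N -> zeval l e = zlc l (zcoef e) N.
Proof.
elim: e => [n|| a IHa b IHb| a IHa] /= H.
- by rewrite zlc_atom.
- by rewrite zlc_zero.
- rewrite zlc_add IHa ?IHb //.
  + exact: leq_trans (leq_maxr _ _) H.
  + exact: leq_trans (leq_maxl _ _) H.
- by rewrite zlc_opp IHa.
Qed.

Definition zeqcoef (e1 e2 : zex) : bool :=
  all (fun k => zcoef e1 k == zcoef e2 k) (iota 0 (maxn (zbound e1) (zbound e2))).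

Lemma zeval_eq (V : zmodType) (l : seq V) e1 e2 :
  zeqcoef e1 e2 = true -> zeval l e1 = zeval l e2.
Proof.
move=> /allP H.
rewrite (zeval_lc l (leq_maxl (zbound e1) (zbound e2))).
rewrite (zeval_lc l (leq_maxr (zbound e1) (zbound e2))).
apply: zlc_ext => k Hk; apply/eqP; apply: H.
by rewrite mem_iota add0n Hk.
Qed.

Ltac zmem x l :=
  match l with
  | nil => constr:(false)
  | x :: _ => constr:(true)
  | _ :: ?l' => zmem x l'
  end.

Ltac zcollect t l :=
  match t with
  | ?a + ?b => let l1 := zcollect a l in zcollect b l1
  | - ?a => zcollect a l
  | 0 => l
  | _ => let b := zmem t l in
         match b with
         | true => l
         | false => constr:(t :: l)
         end
  end.

Ltac zindex x l :=
  match l with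
  | x :: _ => constr:(0%N)
  | _ :: ?l' => let n := zindex x l' in constr:(S n)
  end.

Ltac zreify t l :=
  match t with
  | ?a + ?b => let ra := zreify a l in let rb := zreify b l in constr:(ZAdd ra rb)
  | - ?a => let ra := zreify a l in constr:(ZOpp ra)
  | 0 => constr:(ZZero)
  | _ => let n := zindex t l in constr:(ZAtom n)
  end.

Ltac zmod_eq :=
  match goal with
  | |- @eq ?T ?L ?R =>
    let l0 := constr:(@nil T) in
    let l1 := zcollect L l0 in
    let l := zcollect R l1 in
    let eL := zreify L l in
    let eR := zreify R l in
    change (zeval l eL = zeval l eR); apply: zeval_eq; reflexivity
  end.


Local Notation "g ⊙ f" := (comp g f) (at level 40, left associativity).

Lemma comp0l (A : PreAdd) (X Y Z : Ob A) (f : Mor X Y) : (0 : Mor Y Z) ⊙ f = 0.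
Proof.
have := compDl (0 : Mor Y Z) 0 f; rewrite addr0 => h.
have := congr1 (fun x => x - (0 : Mor Y Z) ⊙ f) h.
by rewrite subrr addrK.
Qed.

Lemma comp0r (A : PreAdd) (X Y Z : Ob A) (g : Mor Y Z) : g ⊙ (0 : Mor X Y) = 0.
Proof.
have := compDr g (0 : Mor X Y) 0; rewrite addr0 => h.
have := congr1 (fun x => x - g ⊙ (0 : Mor X Y)) h.
by rewrite subrr addrK.
Qed.

Lemma compNl (A : PreAdd) (X Y Z : Ob A) (g : Mor Y Z) (f : Mor X Y) : (- g) ⊙ f = - (g ⊙ f).
Proof.
have := compDl g (- g) f; rewrite subrr comp0l => h.
by apply/eqP; rewrite -addr_eq0 addrC -h.
Qed.

Lemma compNr (A : PreAdd) (X Y Z : Ob A) (g : Mor Y Z) (f : Mor X Y) : g ⊙ (- f) = - (g ⊙ f).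
Proof.
have := compDr g f (- f); rewrite subrr comp0r => h.
by apply/eqP; rewrite -addr_eq0 addrC -h.
Qed.

Lemma compBl (A : PreAdd) (X Y Z : Ob A) (g g' : Mor Y Z) (f : Mor X Y) : (g - g') ⊙ f = g ⊙ f - g' ⊙ f.
Proof. by rewrite compDl compNl. Qed.
Lemma compBr (A : PreAdd) (X Y Z : Ob A) (g : Mor Y Z) (f f' : Mor X Y) : g ⊙ (f - f') = g ⊙ f - g ⊙ f'.
Proof. by rewrite compDr compNr. Qed.

Ltac simp := rewrite ?(compDl, compDr, compNl, compNr, comp0l, comp0r, comp1m, compm1); rewrite ?compA ?(addr0, add0r, subr0, sub0r, opprK, oppr0).

Lemma ker_comp (A : PreAdd) (K X Y : Ob A) (k : Mor K X) (f : Mor X Y) : is_kernel k f -> f ⊙ k = 0.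
Proof. by case. Qed.
Lemma ker_lift (A : PreAdd) (K X Y : Ob A) (k : Mor K X) (f : Mor X Y) (W : Ob A) (g : Mor W X) :
  is_kernel k f -> f ⊙ g = 0 -> exists h, k ⊙ h = g.
Proof. by case=> _ H /H [h [? _]]; exists h. Qed.
Lemma ker_canc (A : PreAdd) (K X Y : Ob A) (k : Mor K X) (f : Mor X Y) (W : Ob A) (a b : Mor W K) :
  is_kernel k f -> k ⊙ a = k ⊙ b -> a = b.
Proof.
case=> H0 H E.
have [h [_ Hu]] := H W (k ⊙ a) ltac:(by rewrite compA H0 comp0l).
by rewrite (Hu a erefl) (Hu b (esym E)).
Qed.
Lemma ker_mono (A : PreAdd) (K X Y : Ob A) (k : Mor K X) (f : Mor X Y) : is_kernel k f -> mono k.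
Proof. by move=> H W g E; apply: (ker_canc H); rewrite E comp0r. Qed.
Lemma coker_comp (A : PreAdd) (X Y Q : Ob A) (c : Mor Y Q) (f : Mor X Y) : is_cokernel c f -> c ⊙ f = 0.
Proof. by case. Qed.
Lemma coker_desc (A : PreAdd) (X Y Q : Ob A) (c : Mor Y Q) (f : Mor X Y) (W : Ob A) (g : Mor Y W) :
  is_cokernel c f -> g ⊙ f = 0 -> exists h, h ⊙ c = g.
Proof. by case=> _ H /H [h [? _]]; exists h. Qed.
Lemma coker_canc (A : PreAdd) (X Y Q : Ob A) (c : Mor Y Q) (f : Mor X Y) (W : Ob A) (a b : Mor Q W) :
  is_cokernel c f -> a ⊙ c = b ⊙ c -> a = b.
Proof.
case=> H0 H E.
have [h [_ Hu]] := H W (a ⊙ c) ltac:(by rewrite -compA H0 comp0r).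
by rewrite (Hu a erefl) (Hu b (esym E)).
Qed.
Lemma coker_epi (A : PreAdd) (X Y Q : Ob A) (c : Mor Y Q) (f : Mor X Y) : is_cokernel c f -> epi c.
Proof. by move=> H W g E; apply: (coker_canc H); rewrite E comp0l. Qed.
Lemma mono_canc (A : PreAdd) (X Y : Ob A) (m : Mor X Y) (W : Ob A) (a b : Mor W X) : mono m -> m ⊙ a = m ⊙ b -> a = b.
Proof. move=> H E; apply/eqP; rewrite -subr_eq0; apply/eqP; apply: H; by rewrite compBr E subrr. Qed.
Lemma epi_canc (A : PreAdd) (X Y : Ob A) (m : Mor X Y) (W : Ob A) (a b : Mor Y W) : epi m -> a ⊙ m = b ⊙ m -> a = b.
Proof. move=> H E; apply/eqP; rewrite -subr_eq0; apply/eqP; apply: H; by rewrite compBl E subrr. Qed.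

Lemma mono_ker_coker (A : PreAdd) (hA : abelian A) (X Y Q : Ob A) (m : Mor X Y) (c : Mor Y Q) :
  mono m -> is_cokernel c m -> is_kernel m c.
Proof.
case: hA => _ [_ [_ [_ [Hmk _]]]] Hm Hc.
have [Z [g Hk]] := Hmk _ _ m Hm.
have [g' Hg'] := coker_desc Hc (ker_comp Hk).
split; first exact: coker_comp Hc.
move=> W z Hz; case: Hk => _ Hk; apply: Hk.
by rewrite -Hg' -compA Hz comp0r.
Qed.

Lemma mono_epi_iso (A : PreAdd) (hA : abelian A) (X Y : Ob A) (e : Mor X Y) : mono e -> epi e -> is_iso e.
Proof.
case: hA => _ [_ [_ [_ [Hmk _]]]] Hm He.
have [Z [g Hk]] := Hmk _ _ e Hm.
have g0 : g = 0 by apply: He; exact: ker_comp Hk.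
have [h Hh] := ker_lift (g := idm Y) Hk ltac:(by rewrite g0 comp0l).
exists h; split => //.
by apply: (mono_canc Hm); rewrite compA Hh comp1m compm1.
Qed.

Lemma five (A : PreAdd) (hA : abelian A) (X E E' Y : Ob A) (i : Mor X E) (p : Mor E Y) (i' : Mor X E') (p' : Mor E' Y) (e : Mor E E') :
  short_exact i p -> short_exact i' p' -> e ⊙ i = i' -> p' ⊙ e = p -> is_iso e.
Proof.
move=> [Hk Hc] [Hk' Hc'] Hei Hpe; apply: mono_epi_iso => //.
- move=> W z Hz.
  have [y Hy] := ker_lift Hk (g := z) ltac:(by rewrite -Hpe -compA Hz comp0r).
  have y0 : y = 0 by apply: (ker_mono Hk'); rewrite -Hei -compA Hy.
  by rewrite -Hy y0 comp0r.
- move=> W z Hz.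
  have [y Hy] := coker_desc Hc' (g := z) ltac:(by rewrite -Hei compA Hz comp0l).
  have y0 : y = 0 by apply: (coker_epi Hc); rewrite -Hpe compA Hy.
  by rewrite -Hy y0 comp0l.
Qed.

Lemma split_exact (A : PreAdd) (X1 X2 B : Ob A) (i1 : Mor X1 B) (i2 : Mor X2 B) p1 p2 :
  is_biproduct i1 i2 p1 p2 -> short_exact i1 p2.
Proof.
case=> H11 H22 H21 H12 Hs; split.
- split=> // W g Hg; exists (p1 ⊙ g); split.
    have := congr1 (fun x => x ⊙ g) Hs; simp; rewrite -(compA i2) Hg comp0r addr0.
    by rewrite -compA.
  by move=> h' <-; rewrite compA H11 comp1m.
- split=> // W g Hg; exists (g ⊙ i2); split.
    have := congr1 (fun x => g ⊙ x) Hs; simp; rewrite Hg comp0l add0r.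
    by [].
  by move=> h' <-; rewrite -compA H22 compm1.
Qed.

Lemma pushout (A : PreAdd) (hA : abelian A) (C : Ob A -> Prop) (hC : ext_closed_additive C)
  (M E Y : Ob A) (i : Mor M E) (p : Mor E Y) (N : Ob A) (f : Mor M N) :
  conflation C i p -> C N ->
  exists (E' : Ob A) (i' : Mor N E') (p' : Mor E' Y) (e : Mor E E'),
  [/\ conflation C i' p', e ⊙ i = i' ⊙ f, p' ⊙ e = p,
      (forall (Z : Ob A) (b : Mor E Z) (c : Mor N Z), b ⊙ i = c ⊙ f ->
          exists u, u ⊙ e = b /\ u ⊙ i' = c)
    & (forall (Z : Ob A) (u u' : Mor E' Z), u ⊙ e = u' ⊙ e -> u ⊙ i' = u' ⊙ i' -> u = u')].
Proof.
case=> [[Hk Hc] CM CE CY] CN.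
have hA' := hA; case: hA' => _ [Hbi [_ [Hcok _]]].
have [S [iE [iN [pE [pN [H11 H22 H21 H12 Hs]]]]]] := Hbi E N.
pose m := iE ⊙ i - iN ⊙ f.
have [E' [c Hcm]] := Hcok _ _ m.
have Hcm0 := coker_comp Hcm.
have Hei : c ⊙ iE ⊙ i = c ⊙ iN ⊙ f.
  by apply/eqP; rewrite -subr_eq0 -!compA -compBr -/m Hcm0.
have Hu : forall (Z : Ob A) (b : Mor E Z) (c0 : Mor N Z), b ⊙ i = c0 ⊙ f ->
          exists u, u ⊙ (c ⊙ iE) = b /\ u ⊙ (c ⊙ iN) = c0.
  move=> Z b c0 Hbc.
  have [u Hu] := coker_desc Hcm (g := b ⊙ pE + c0 ⊙ pN)
    ltac:(by rewrite /m; simp; rewrite -!(compA _ pE) -!(compA _ pN) H11 H22 H21 H12; simp; rewrite Hbc subrr).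
  by exists u; rewrite !compA Hu; simp; rewrite -!compA H11 H22 H21 H12; simp.
have Hj : forall (Z : Ob A) (u u' : Mor E' Z), u ⊙ (c ⊙ iE) = u' ⊙ (c ⊙ iE) ->
     u ⊙ (c ⊙ iN) = u' ⊙ (c ⊙ iN) -> u = u'.
  move=> Z u u' E1 E2; apply: (coker_canc Hcm).
  have -> : u ⊙ c = u ⊙ c ⊙ idm S by rewrite compm1.
  have -> : u' ⊙ c = u' ⊙ c ⊙ idm S by rewrite compm1.
  by rewrite -Hs; simp; rewrite -!(compA _ _ iE) -!(compA _ _ iN) E1 E2.
have [p' [Hp'e Hp'i]] := Hu _ p 0 ltac:(by rewrite (ker_comp Hk) comp0l).
have Hmono : mono m.
  move=> W x Hx.
  have : pE ⊙ (m ⊙ x) = 0 by rewrite Hx comp0r.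
  rewrite /m; simp; rewrite H11 H12; simp => Hix.
  by apply: (ker_mono Hk).
have Hmk := mono_ker_coker hA Hmono Hcm.
have Hi'mono : mono (c ⊙ iN).
  move=> W y Hy.
  have [x Hx] := ker_lift Hmk (g := iN ⊙ y) ltac:(by rewrite compA).
  have x0 : x = 0.
    apply: (ker_mono Hk).
    have := congr1 (fun z => pE ⊙ z) Hx; rewrite /m; simp; rewrite ?H11 ?H12; simp.
    by move=> ->.
  have := congr1 (fun z => pN ⊙ z) Hx; rewrite x0 !comp0r compA H22 comp1m.
  by move=> <-.
have Hcok' : is_cokernel p' (c ⊙ iN).
  split => // W h Hh.
  have [k Hk'] := coker_desc Hc (g := h ⊙ (c ⊙ iE))
    ltac:(by rewrite -compA Hei (compA h) Hh comp0l).
  exists k; split.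
    apply: Hj; first by rewrite -compA Hp'e.
    by rewrite -compA Hp'i comp0r Hh.
  move=> k' Hk''; apply: (coker_canc Hc); rewrite Hk' -Hk'' -compA Hp'e //.
have Hker' := mono_ker_coker hA Hi'mono Hcok'.
have CE' : C E'.
  by case: hC => _ _ Hext; apply: (Hext _ _ _ _ _ (conj Hker' Hcok')).
exists E', (c ⊙ iN), p', (c ⊙ iE); split => //; by rewrite ?compA.
Qed.

Lemma proj_sum (A : PreAdd) (C : Ob A -> Prop) (X P1 P2 : Ob A)
  (a1 : Mor P1 X) (b1 : Mor X P1) (a2 : Mor P2 X) (b2 : Mor X P2) :
  C X -> projective C P1 -> projective C P2 -> a1 ⊙ b1 + a2 ⊙ b2 = idm X -> projective C X.
Proof.
move=> CX [_ H1] [_ H2] Hs; split => // X' E Y i p Hc g.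
have [h1 Hh1] := H1 _ _ _ _ _ Hc (g ⊙ a1).
have [h2 Hh2] := H2 _ _ _ _ _ Hc (g ⊙ a2).
exists (h1 ⊙ b1 + h2 ⊙ b2); simp; rewrite Hh1 Hh2 -!compA -compDr Hs.
by rewrite compm1.
Qed.

Lemma frob_inj_proj (A : PreAdd) (C : Ob A -> Prop) (hF : frobenius C) (I : Ob A) :
  injective C I -> projective C I.
Proof. by case: hF => _ _ H HI; apply/(H _ HI.1). Qed.
Lemma frob_proj_inj (A : PreAdd) (C : Ob A -> Prop) (hF : frobenius C) (I : Ob A) :
  projective C I -> injective C I.
Proof. by case: hF => _ _ H HI; apply/(H _ HI.1). Qed.

Lemma split_from_section (A : PreAdd) (hA : abelian A) (C : Ob A -> Prop) (X N : Ob A)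
  (xi : extension C X N) (s : Mor X (ext_mid xi)) :
  ext_out xi ⊙ s = idm X -> ext_zero xi.
Proof.
case: xi s => E i p Hc /= s Hs.
case: hA => _ [Hbi _].
have [B [i1 [i2 [p1 [p2 Hb]]]]] := Hbi N X.
exists B, i1, i2, p1, p2; split => //.
case: Hb => H11 H22 H21 H12 _.
exists (i ⊙ p1 + s ⊙ p2); split.
  by simp; rewrite -!compA H11 H21; simp.
have [[Hk _] _ _ _] := Hc.
simp; rewrite Hs (ker_comp Hk); simp; by [].
Qed.

Lemma factor_phantom (A : PreAdd) (hA : abelian A) (C : Ob A -> Prop) (hF : frobenius C)
  (M N : Ob A) (f : Mor M N) : factors_through_projective C f -> ext_phantom0 C f.
Proof.
case=> P [a [b [HP ->]]] X CX xi xi' [e [He1 He2]].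
have [_ Hinj] := frob_proj_inj hF HP.
case: xi e He1 He2 => E i p Hc /= e He1 He2.
have [h Hh] := Hinj _ _ _ _ _ Hc a.
have [[Hk Hco] _ _ _] := Hc.
have [s Hs] := coker_desc Hco (g := e - ext_in xi' ⊙ b ⊙ h)
  ltac:(by rewrite compBl He1 -(compA _ h) Hh compA subrr).
apply: (split_from_section hA (s := s)).
have Hepi := coker_epi Hco.
apply: (epi_canc Hepi); rewrite -compA Hs compBr He2 comp1m.
have [[Hk' _] _ _ _] := ext_confl xi'.
by rewrite !compA (ker_comp Hk'); simp.
Qed.

Lemma phantom_factor (A : PreAdd) (hA : abelian A) (C : Ob A -> Prop)
  (hC : ext_closed_additive C) (hF : frobenius C)
  (M N : Ob A) (hM : C M) (hN : C N) (f : Mor M N) : ext_phantom0 C f -> factors_through_projective C f.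
Proof.
move=> Hph.
have hF' := hF; case: hF' => _ Hinj _.
have [I [Y [i [p [Hc HI]]]]] := Hinj M hM.
have [E' [i' [p' [e [Hc' Hei Hpe _ _]]]]] := pushout hA hC f Hc hN.
have CY : C Y by case: Hc.
have := Hph Y CY (Extension Hc) (Extension Hc') ltac:(by exists e).
case=> B [i1 [i2 [p1 [p2 [Hb [e0 /= [He01 He02]]]]]]].
have [Hse' _ _ _] := Hc'.
have [g [Hg1 Hg2]] := five hA (split_exact Hb) Hse' He01 He02.
exists I, i, (p1 ⊙ g ⊙ e); split; first exact: (@frob_inj_proj A C hF I HI).
case: Hb => H11 _ _ _ _.
by rewrite -compA Hei -He01 !compA -(compA p1 g e0) Hg1 compm1 H11 comp1m.
Qed.

Lemma cA (A : PreAdd) (X Y Z : Ob A) (u : Mor Y Z) (v : Mor X Y) (w : Mor X Z) :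
  u ⊙ v = w -> forall (V : Ob A) (x : Mor Z V), x ⊙ u ⊙ v = x ⊙ w.
Proof. by move=> H V x; rewrite -compA H. Qed.

Ltac rw H := rewrite ?H ?(cA H); simp.

Lemma bip_src (A : PreAdd) (X1 X2 B Z : Ob A) (i1 : Mor X1 B) (i2 : Mor X2 B) p1 p2 (u v : Mor B Z) :
  is_biproduct i1 i2 p1 p2 -> u ⊙ i1 = v ⊙ i1 -> u ⊙ i2 = v ⊙ i2 -> u = v.
Proof.
case=> _ _ _ _ Hs E1 E2.
rewrite -(compm1 u) -(compm1 v) -Hs; simp.
by rewrite E1 E2.
Qed.

Definition stable_iso (A : PreAdd) (C : Ob A -> Prop) (M N : Ob A) (f : Mor M N) :=
  exists g : Mor N M, factors_through_projective C (g ⊙ f - idm M) /\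
                      factors_through_projective C (f ⊙ g - idm N).

Lemma matrix_stable (A : PreAdd) (C : Ob A -> Prop) (M N : Ob A) (f : Mor M N) :
  matrix_iso_condition C f -> stable_iso C f.
Proof.
case=> P [Q [g1 [l [g2 [HP [HQ [B1 [iM [iQ [pM [pQ [B2 [jN [jP [qN [qP [Hb1 [Hb2 [Psi [H1 H2]]]]]]]]]]]]]]]]]]]].
case: Hb1 => a11 a22 a21 a12 as_.
case: Hb2 => b11 b22 b21 b12 bs.
exists (pM ⊙ Psi ⊙ jN); split.
- exists P, l, (-(pM ⊙ Psi ⊙ jP)); split => //.
  have := congr1 (fun x => pM ⊙ x ⊙ iM) H1; simp.
  rw a11; rw a21; rw a12; rw a22.
  move=> <-; zmod_eq.
- exists Q, (pQ ⊙ Psi ⊙ jN), (- g1); split => //.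
  have := congr1 (fun x => qN ⊙ x ⊙ jN) H2; simp.
  rw b11; rw b21; rw b12; rw b22.
  move=> <-; zmod_eq.
Qed.

Lemma stable_extinv (A : PreAdd) (hA : abelian A) (C : Ob A -> Prop)
  (hC : ext_closed_additive C) (hF : frobenius C)
  (M N : Ob A) (hM : C M) (hN : C N) (f : Mor M N) :
  stable_iso C f -> ext_invertible0 C f.
Proof.
case=> g [[P0 [l [s [HP0 Hgf]]]] [Q0 [w [t [HQ0 Hfg]]]]].
have [_ HinjP0] := frob_proj_inj hF HP0.
have [_ HinjQ0] := frob_proj_inj hF HQ0.
move=> X CX; split.
- move=> [E1 i1 p1 Hc1] [E2 i2 p2 Hc2] [F1 j1 q1 Hd1] [F2 j2 q2 Hd2] /=.
  move=> [e1 /= [He1a He1b]] [e2 /= [He2a He2b]] [w0 /= [Hw1 Hw2]].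
  have [H1 [m1 [r1 [d1 [Hc'1 Hd1e Hd1p Hu1 Hj1]]]]] := pushout hA hC g Hd1 hM.
  have [H2 [m2 [r2 [d2 [Hc'2 Hd2e Hd2p Hu2 Hj2]]]]] := pushout hA hC g Hd2 hM.
  have [l1 Hl1] := HinjP0 _ _ _ _ _ Hc1 l.
  have [l2 Hl2] := HinjP0 _ _ _ _ _ Hc2 l.
  have [[Hk'1 _] _ _ _] := Hc'1.
  have [[Hk'2 _] _ _ _] := Hc'2.
  have Hm1 := ker_comp Hk'1.
  have Hm2 := ker_comp Hk'2.
  have Hsl : s ⊙ l = g ⊙ f - idm M by [].
  have K1a : (d1 ⊙ e1 - m1 ⊙ s ⊙ l1) ⊙ i1 = m1.
    simp; rw Hl1; rw He1a; rw Hd1e; rw Hsl; zmod_eq.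
  have K1b : r1 ⊙ (d1 ⊙ e1 - m1 ⊙ s ⊙ l1) = p1.
    simp; rw Hd1p; rw Hm1; by rw He1b.
  have K2a : (d2 ⊙ e2 - m2 ⊙ s ⊙ l2) ⊙ i2 = m2.
    simp; rw Hl2; rw He2a; rw Hd2e; rw Hsl; zmod_eq.
  have K2b : r2 ⊙ (d2 ⊙ e2 - m2 ⊙ s ⊙ l2) = p2.
    simp; rw Hd2p; rw Hm2; by rw He2b.
  have [Hse2 _ _ _] := Hc2.
  have [Hse'2 _ _ _] := Hc'2.
  have [k2 [Hk2a Hk2b]] := five hA Hse2 Hse'2 K2a K2b.
  have [om [Hom1 Hom2]] := Hu1 _ (d2 ⊙ w0) m2 ltac:(by rewrite -compA Hw1 Hd2e).
  have Hrom : r2 ⊙ om = r1.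
    apply: Hj1.
      rewrite -compA Hom1 compA Hd2p Hw2; by rewrite Hd1p.
    by rewrite -compA Hom2 Hm2 Hm1.
  exists (k2 ⊙ om ⊙ (d1 ⊙ e1 - m1 ⊙ s ⊙ l1)); split.
    by rewrite -(compA (k2 ⊙ om)) K1a -compA Hom2 -K2a compA Hk2a comp1m.
  by rewrite /= -K2b !compA -(compA _ _ k2) Hk2b compm1 Hrom K1b.
- move=> [E j q Hc].
  have [E1 [i1 [p1 [e1 [Hc1 He1 Hp1 Hu1 Hj1]]]]] := pushout hA hC g Hc hM.
  have [E2 [i2 [p2 [e2 [Hc2 He2 Hp2 Hu2 Hj2]]]]] := pushout hA hC f Hc1 hN.
  exists (Extension Hc1), (Extension Hc2); split; first by exists e2.
  have [w' Hw'] := HinjQ0 _ _ _ _ _ Hc w.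
  have [[Hk _] _ _ _] := Hc.
  have Hqj := ker_comp Hk.
  have [[Hk1 _] _ _ _] := Hc1.
  have Hpi1 := ker_comp Hk1.
  have [[Hk2 _] _ _ _] := Hc2.
  have Hpi2 := ker_comp Hk2.
  have Htw : t ⊙ w = f ⊙ g - idm N by [].
  have [al [Hal1 Hal2]] := Hu1 _ (idm E + j ⊙ t ⊙ w') (j ⊙ f)
    ltac:(by simp; rw Hw'; rw Htw; zmod_eq).
  have Hqal : q ⊙ al = p1.
    apply: Hj1.
      rewrite -compA Hal1 Hp1; simp; rw Hqj; by [].
    by rewrite -compA Hal2 Hpi1 compA Hqj comp0l.
  have [u [Hu1' Hu2']] := Hu2 _ al j Hal2.
  exists u; split => //=.
  apply: Hj2.
    by rewrite -compA Hu1' Hqal Hp2.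
  by rewrite -compA Hu2' Hqj Hpi2.
Qed.

Lemma extinv_stable (A : PreAdd) (hA : abelian A) (C : Ob A -> Prop)
  (hC : ext_closed_additive C) (hF : frobenius C)
  (M N : Ob A) (hM : C M) (hN : C N) (f : Mor M N) :
  ext_invertible0 C f -> stable_iso C f.
Proof.
move=> Hinv.
have hF' := hF; case: hF' => _ Henough _.
have [J [Y' [j [q [Hcj HJ]]]]] := Henough N hN.
have CY' : C Y' by case: Hcj.
have [_ Hsurj] := Hinv Y' CY'.
have [[Ex ix px Hcx] [[F' j' q' Hc'] [[e /= [He1 He2]] [w /= [Hw1 Hw2]]]]] := Hsurj (Extension Hcj).
have He1s : e ⊙ ix = j' ⊙ f := He1.
have Hw1s : w ⊙ j' = j := Hw1.
have HJp := frob_inj_proj hF HJ.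
have [k Hk] := HJp.2 _ _ _ _ _ Hcx q.
have [[Hkj _] _ _ _] := Hcj.
have Hqj := ker_comp Hkj.
have [[Hkx _] _ _ _] := Hcx.
have [g0 Hg0] := ker_lift Hkx (g := k ⊙ j) ltac:(by rewrite compA Hk Hqj).
have [t0 Ht0] := ker_lift Hkj (g := w ⊙ e ⊙ k - idm J)
  ltac:(by simp; rw Hw2; rw He2; rw Hk; zmod_eq).
have Hfg : f ⊙ g0 - idm N = t0 ⊙ j.
  apply: (ker_canc Hkj).
  have X : w ⊙ e ⊙ k ⊙ j = j ⊙ f ⊙ g0.
    by rewrite -(compA (w ⊙ e) k j) -Hg0 compA -(compA w e ix) He1s compA Hw1s.
  rewrite compA Ht0; simp; rewrite X; zmod_eq.
have [I [Y [i [p [Hc HI]]]]] := Henough M hM.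
have CY : C Y by case: Hc.
have [Hinj _] := Hinv Y CY.
have [E2 [i2 [p2 [e2 [Hc2 He2' Hp2 Hu2 Hj2]]]]] := pushout hA hC (g0 ⊙ f) Hc hM.
have [E1 [i1 [p1 [e1 [Hc1 He1' Hp1 Hu1 Hj1]]]]] := pushout hA hC f Hc hN.
have [w1 Hw1'] := HJ.2 _ _ _ _ _ Hc (j ⊙ f).
have [[Hk1 _] _ _ _] := Hc1.
have Hpi1 := ker_comp Hk1.
have [[Hk2 _] _ _ _] := Hc2.
have Hpi2 := ker_comp Hk2.
have [u [Hua Hub]] := Hu2 _ (e1 + i1 ⊙ t0 ⊙ w1) (i1 ⊙ f)
  ltac:(by simp; rw Hw1'; rw He1'; rw (esym Hfg); zmod_eq).
have Hpu : p1 ⊙ u = p2.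
  apply: Hj2.
    by rewrite -compA Hua Hp2; simp; rw Hp1; rw Hpi1.
  by rewrite -compA Hub compA Hpi1 comp0l Hpi2.
have [v [Hv1 Hv2]] := Hinj (Extension Hc) (Extension Hc2) (Extension Hc1) (Extension Hc1)
  ltac:(by exists e1) ltac:(by exists u) ltac:(by exists (idm E1); rewrite comp1m compm1).
simpl in Hv1, Hv2.
have [s0 Hs0] := ker_lift Hk2 (g := e2 - v) ltac:(by simp; rw Hp2; rw Hv2; zmod_eq).
have Hgf : g0 ⊙ f - idm M = s0 ⊙ i.
  apply: (ker_canc Hk2).
  rewrite compA Hs0; simp; rw He2'; rw Hv1; zmod_eq.
exists g0; split.
  exists I, i, s0; split; last exact: Hgf. exact (frob_inj_proj hF HI).
by exists J, j, t0.
Qed.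

Lemma stable_matrix (A : PreAdd) (hA : abelian A) (C : Ob A -> Prop)
  (hC : ext_closed_additive C) (hF : frobenius C)
  (M N : Ob A) (hM : C M) (hN : C N) (f : Mor M N) :
  stable_iso C f -> matrix_iso_condition C f.
Proof.
case=> g [[P0 [l0 [s0 [HP0 Hgf0]]]] [J [w [t [HJ Hfg0]]]]].
have hF' := hF; case: hF' => _ Henough _.
have [I [Y [i [p [Hc HI]]]]] := Henough M hM.
have [_ HinjP0] := frob_proj_inj hF HP0.
have [l0' Hl0'] := HinjP0 _ _ _ _ _ Hc l0.
have [s Hsi] : exists s : Mor I M, s ⊙ i = g ⊙ f - idm M.
  by exists (s0 ⊙ l0'); rewrite -compA Hl0' -Hgf0.
have Htw : t ⊙ w = f ⊙ g - idm N by [].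
have [E' [i' [p' [e [Hc' Hei Hpe Hu Hj]]]]] := pushout hA hC f Hc hN.
have hA' := hA; case: hA' => _ [Hbi _].
have [B2 [jN [jI [qN [qI Hb2]]]]] := Hbi N I.
have [B1 [iM [iQ [pM [pQ Hb1]]]]] := Hbi M E'.
have Hb2' := Hb2; case: Hb2' => b11 b22 b21 b12 bs.
have Hb1' := Hb1; case: Hb1' => a11 a22 a21 a12 as_.
have [sg [Hsg1 Hsg2]] := Hu _ (- jI - jN ⊙ f ⊙ s - jI ⊙ i ⊙ s) (jN - jN ⊙ f ⊙ g - jI ⊙ i ⊙ g)
  ltac:(by simp; rw Hsi; zmod_eq).
have Hrs : g ⊙ qN ⊙ sg - s ⊙ qI ⊙ sg = 0.
  apply: Hj.
    simp; rw Hsg1; rw b11; rw b12; rw b21; rw b22; rw Hsi; zmod_eq.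
  simp; rw Hsg2; rw b11; rw b12; rw b21; rw b22; rw Hsi; zmod_eq.
have Hps : i' ⊙ qN ⊙ sg - e ⊙ qI ⊙ sg = idm E'.
  apply: Hj.
    simp; rw Hsg1; rw b11; rw b12; rw b21; rw b22; rw Hei; zmod_eq.
  simp; rw Hsg2; rw b11; rw b12; rw b21; rw b22; rw Hei; zmod_eq.
have HIp := frob_inj_proj hF HI.
have CE' : C E' by case: Hc'.
have HE'p : projective C E'.
  apply (@proj_sum A C E' I J e (i ⊙ g ⊙ qN ⊙ sg - qI ⊙ sg)
                   (- (i' ⊙ t)) (w ⊙ qN ⊙ sg) CE' HIp HJ).
  rewrite -Hps; simp; rw Hei; rw Htw; zmod_eq.
exists I, E', (qN ⊙ sg), i, (qI ⊙ sg); split => //; split => //.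
exists B1, iM, iQ, pM, pQ, B2, jN, jI, qN, qI; split => //; split => //.
exists (iM ⊙ (g ⊙ qN - s ⊙ qI) + iQ ⊙ (i' ⊙ qN - e ⊙ qI)); split.
- apply: (bip_src Hb1).
    simp; rw a11; rw a12; rw a21; rw a22; rw b11; rw b12; rw b21; rw b22; rw Hsi; rw Hei; zmod_eq.
  transitivity (iM ⊙ (g ⊙ qN ⊙ sg - s ⊙ qI ⊙ sg) + iQ ⊙ (i' ⊙ qN ⊙ sg - e ⊙ qI ⊙ sg)).
    simp; rw a11; rw a12; rw a21; rw a22; rw b11; rw b12; rw b21; rw b22; zmod_eq.
  by rewrite Hrs Hps; simp.
- apply: (bip_src Hb2).
    simp; rw a11; rw a12; rw a21; rw a22; rw b11; rw b12; rw b21; rw b22; rw Hsg2; rw b11; rw b12; rw b21; rw b22; zmod_eq.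
  simp; rw a11; rw a12; rw a21; rw a22; rw b11; rw b12; rw b21; rw b22; rw Hsg1; rw b11; rw b12; rw b21; rw b22; zmod_eq.
Qed.

Theorem proposition3p8 (A : PreAdd) (hA : abelian A) (C : Ob A -> Prop)
    (hC : ext_closed_additive C) (hF : frobenius C)
    (M N : Ob A) (hM : C M) (hN : C N) (f : Mor M N) :
  (ext_phantom0 C f <-> factors_through_projective C f) /\
  (ext_invertible0 C f <-> matrix_iso_condition C f).
Proof.
split; split.
- exact (phantom_factor hA hC hF hM hN (f := f)).
- exact (@factor_phantom A hA C hF M N f).
- move=> H; exact (stable_matrix hA hC hF hM hN (extinv_stable hA hC hF hM hN (f := f) H)).
- move=> H; exact (stable_extinv hA hC hF hM hN (f := f) (matrix_stable H)).
Qed.
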